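(* Let $x^0\in\{0,1\}^n$ be the input of the hypermutation operator and let $x^i$ be the $i$-th bitstring it samples. Let $S\subset\{1,\dots,n\}$ be an arbitrary set of indices, and for a bitstring $z$ let $z_S$ denote the subsequence of $z$ consisting of the positions in $S$. For any target string $s^*\in\{0,1\}^{|S|}$ and any integer $m>|S|$, the probability that $x^i_S=s^*$ for all $i\in\{m,\dots,n-m\}$ is at least $\left(\frac{m-|S|+1}{n-|S|+1}\right)^{|S|}$.
   Context: The hypermutation operator on input $x^0\in\{0,1\}^n$ (disregarding its stopping rule) flips the $n$ bit positions one at a time in a uniformly random order, i.e. according to a uniformly random permutation of $\{1,\dots,n\}$; the $i$-th sampled bitstring $x^i$ is the string obtained from $x^0$ after the first $i$ flips, $i=1,\dots,n$. *)

(* Defs.v *)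
From mathcomp Require Import all_boot all_order all_algebra all_fingroup.
Set Implicit Arguments. Unset Strict Implicit. Unset Printing Implicit Defensive.

(* The set of positions flipped after the first i flips, when the bit
   positions are flipped in the order sigma 0, sigma 1, ..., sigma (n-1). *)
Definition flipped (n : nat) (sigma : 'S_n) (i : nat) : {set 'I_n} :=
  [set sigma k | k in [set k : 'I_n | k < i]].

Definition hm_sample (n : nat) (x0 : 'I_n -> bool) (sigma : 'S_n) (i : nat)
  : 'I_n -> bool :=
  fun j => x0 j (+) (j \in flipped sigma i).

Definition restrict (n : nat) (z : 'I_n -> bool) (S : {set 'I_n}) : seq bool :=
  [seq z j | j <- enum S].

Definition good_perm (n : nat) (x0 : 'I_n -> bool) (S : {set 'I_n})
  (s : seq bool) (m : nat) (sigma : 'S_n) : bool :=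
  [forall i : 'I_n.+1, (m <= i <= n - m) ==>
     (restrict (hm_sample x0 sigma i) S == s)].

Definition hm_prob (n : nat) (x0 : 'I_n -> bool) (S : {set 'I_n})
  (s : seq bool) (m : nat) : rat :=
  (#|[set sigma : 'S_n | good_perm x0 S s m sigma]|%:R / #|'S_n|%:R)%R.

(* Main.v *)
Require Import Defs.
From mathcomp Require Import all_boot all_order all_algebra all_fingroup.
From mathcomp Require Import zify.
Set Implicit Arguments. Unset Strict Implicit. Unset Printing Implicit Defensive.
Import Order.TTheory GRing.Theory Num.Theory.

Definition Bset (R : finType) (P : nat -> pred R) L :=
  [set t : L.-tuple R | uniq t && [forall j : 'I_L, P j (tnth t j)]].

Lemma count_inj (R : finType) (P : nat -> pred R) L :
  \prod_(j < L) (#|P j| - j) <= #|Bset P L|.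
Proof.
elim: L => [|L IH]; first by rewrite big_ord0 card_gt0; apply/set0Pn; exists [tuple]; rewrite inE /=; apply/forallP => -[].
rewrite big_ord_recr /=.
set X := [set u : L.-tuple R * R | (u.1 \in Bset P L) && ((P L u.2) && (u.2 \notin u.1))].
have cX : #|X| = \sum_(t in Bset P L) #|[pred x | P L x && (x \notin t)]|.
  rewrite -sum1_card.
  have := pair_big_dep (fun t => t \in Bset P L) (fun t x => P L x && (x \notin t)) (fun _ _ => 1%N).
  move=> /= E.
  transitivity (\sum_(t in Bset P L) \sum_(x | P L x && (x \notin t)) 1%N).
    by rewrite E; apply: eq_bigl => u; rewrite inE.
  by apply: eq_bigr => t _; rewrite sum1_card.
have le1 : #|Bset P L| * (#|P L| - L) <= #|X|.
  rewrite cX -sum_nat_const; apply: leq_sum => t _.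
  rewrite leq_subLR -(cardID (mem t) (P L)) leq_add //.
    rewrite -{3}(size_tuple t); apply: leq_trans (card_size t).
    apply: subset_leq_card; apply/subsetP => x; rewrite !inE /=.
    by case/andP.
  apply: subset_leq_card; apply/subsetP => x; rewrite !inE /= andbC.
  by move=> h; exact: h.

apply: leq_trans (leq_mul IH (leqnn (#|P L| - L))) _.
apply: leq_trans le1 _.
have finj : injective (fun u : L.-tuple R * R => rcons_tuple u.1 u.2).
  move=> [t x] [t' x'] /= /(congr1 val) /= /rcons_inj [] /val_inj -> ->; done.
rewrite -(card_imset X finj); apply: subset_leq_card; apply/subsetP => _ /imsetP [[t x] + ->].
rewrite !inE /= => /andP [/andP [ut /forallP ht] /andP [px nx]].
rewrite rcons_uniq nx ut /=; apply/forallP => j.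
rewrite (tnth_nth x) /= nth_rcons size_tuple.
case: ltnP => jL.
  by have := ht (Ordinal jL); rewrite (tnth_nth x).
have -> : nat_of_ord j = L by apply/eqP; rewrite eqn_leq jL -ltnS ltn_ord.
by rewrite eqxx.
Qed.

Lemma arith (N k m : nat) (c : nat -> nat) : k < m -> m <= N ->
  (forall j, j < k -> m - j <= c j) -> (forall j, k <= j < N -> N - j <= c j) ->
  ((((m-k).+1%:R / (N-k).+1%:R) ^+ k : rat) <= (\prod_(j<N) c j)%:R / N`!%:R)%R.
Proof.
move=> km mN hc1 hc2.
set r : rat := ((m-k).+1%:R / (N-k).+1%:R)%R.
have -> : N`! = \prod_(j < N) (N - j).
  rewrite fact_prod big_rev_mkord subn1 /=.
  by apply: eq_bigr => j _; rewrite subSS.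
rewrite !natr_prod -prodf_div.
have r0 : (0 <= r)%R by rewrite divr_ge0 ?ler0n.
have -> : (r ^+ k = \prod_(j < N) (if (j < k)%N then r else 1))%R.
  rewrite -(big_mkord xpredT (fun j => if (j < k)%N then r else 1%R)).
  rewrite (big_cat_nat _ (n:=k)) //=; last by lia.
  rewrite (eq_big_nat _ _ (F2 := fun=> r)); last by move=> i /andP [_ ->].
  rewrite (eq_big_nat _ _ (F1 := fun i => if (i < k)%N then r else 1%R) (F2 := fun=> 1%R)); last first.
    by move=> i /andP [h _]; rewrite ltnNge h.
  by rewrite prodr_const_nat big1 // mulr1 subn0.
apply: ler_prod => j _.
have jN := ltn_ord j.
have p0 : (0 < (N - j)%:R :> rat)%R by rewrite ltr0n subn_gt0.
case: ltnP => jk; rewrite ?r0 ?ler01 /= ler_pdivlMr //.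
  apply: (@le_trans _ _ (m - j)%:R%R); last by rewrite ler_nat hc1.
  rewrite /r mulrAC ler_pdivrMr ?ltr0Sn // -!natrM ler_nat.
  nia.
by rewrite mul1r ler_nat hc2 // jk.
Qed.
Lemma flippedE n (sigma : 'S_n) i p : (p \in flipped sigma i) = ((sigma^-1)%g p < i).
Proof.
apply/imsetP/idP => [[k]|h]; first by rewrite inE => hk ->; rewrite permK.
by exists ((sigma^-1)%g p); rewrite ?inE ?permKV.
Qed.

Lemma card_ge (n m a : nat) (Q : pred 'I_n.+1) : a + m <= n.+1 ->
  (forall i, i < m -> Q (inord (a+i))) -> m <= #|Q|.
Proof.
move=> h hQ.
have inj : {in [set: 'I_m] &, injective (fun i : 'I_m => (inord (a + i) : 'I_n.+1))}.
  have hb (i : 'I_m) : a + i <= n by rewrite -ltnS; apply: leq_trans h; rewrite ltn_add2l.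
  move=> i j _ _ /(congr1 val) /=; rewrite !inordK ?ltnS ?hb //.
  by move/addnI/val_inj.
rewrite -{1}(card_ord m) -cardsT -(card_in_imset inj).
apply: subset_leq_card; apply/subsetP => _ /imsetP [i _ ->].
exact: hQ.
Qed.

Theorem lemma3 (n : nat) (x0 : 'I_n -> bool) (S : {set 'I_n})
  (s : seq bool) (m : nat) :
  size s = #|S| -> #|S| < m -> m <= n ->
  (((m - #|S|).+1%:R / (n - #|S|).+1%:R) ^+ #|S| <= hm_prob x0 S s m)%R.
Proof.
case: n x0 S => [|n] x0 S hs hSm hmn; first by exfalso; lia.
pose ord := enum S ++ enum (~: S).
have ord_uniq : uniq ord.
  rewrite cat_uniq !enum_uniq /= andbT; apply/hasPn => x.
  by rewrite !mem_enum inE.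
have ord_all p : p \in ord by rewrite mem_cat !mem_enum inE orbN.
have ord_size : size ord = n.+1.
  by rewrite size_cat -!cardE cardsC card_ord.
pose tgt p := nth false s (index p (enum S)).
pose A p (x : 'I_n.+1) := if x0 p != tgt p then x < m else n.+1 - m <= x.
pose P j : pred 'I_n.+1 := fun x => [forall p in S, (index p ord == j) ==> A p x].
pose f (t : n.+1.-tuple 'I_n.+1) : {ffun 'I_n.+1 -> 'I_n.+1} := [ffun p => nth p t (index p ord)].
pose mk t : 'S_n.+1 := ((insubd (1 : 'S_n.+1)%g (f t))^-1)%g.
have ilt p : index p ord < n.+1 by rewrite -[X in _ < X]ord_size index_mem.
have finj t : t \in Bset P n.+1 -> injectiveb (f t).
  rewrite inE => /andP [ut _]; apply/injectiveP => p q; rewrite !ffunE => e.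
  have ip : index p ord < size t by rewrite size_tuple.
  have iq : index q ord < size t by rewrite size_tuple.
  rewrite (set_nth_default ord0 _ ip) (set_nth_default ord0 _ iq) in e.
  move/eqP: e; rewrite nth_uniq // => /eqP.
  exact: index_inj.
have mkE t : t \in Bset P n.+1 -> forall p, ((mk t)^-1)%g p = nth p t (index p ord).
  move=> ht p; rewrite /mk invgK.
  have E := insubdK (1 : 'S_n.+1)%g (finj t ht).
  have E' : pval (insubd (1 : 'S_n.+1)%g (f t)) = f t := E.
  by rewrite -pvalE E' ffunE.
have mkA t : t \in Bset P n.+1 -> forall p, p \in S -> A p (((mk t)^-1)%g p).
  move=> ht p pS; rewrite mkE //; move: ht; rewrite inE => /andP[_ /forallP h].
  have := h (Ordinal (ilt p)); rewrite (tnth_nth p) /= => /forallP /(_ p).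
  by rewrite pS eqxx.
have mk_inj : {in Bset P n.+1 &, injective mk}.
  move=> t1 t2 h1 h2 e; apply: eq_from_tnth => j.
  pose p := nth ord0 ord j.
  have ij : index p ord = j by rewrite index_uniq // ord_size.
  have := mkE t1 h1 p; rewrite e mkE // ij => E.
  by rewrite !(tnth_nth p) E.
have good_suff (sigma : 'S_n.+1) : (forall p, p \in S -> A p ((sigma^-1)%g p)) ->
    good_perm x0 S s m sigma.
  move=> hA; apply/forallP => i; apply/implyP => /andP [hi1 hi2]; apply/eqP.
  rewrite /restrict; apply: (@eq_from_nth _ false) => [|j]; first by rewrite size_map -cardE hs.
  rewrite size_map -cardE => jk; rewrite (nth_map ord0) -?cardE //.
  set p := nth ord0 (enum S) j.
  have pS : p \in S by rewrite -mem_enum mem_nth // -cardE.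
  have tp : tgt p = nth false s j by rewrite /tgt index_uniq ?enum_uniq // -cardE.
  rewrite /hm_sample flippedE -tp.
  have key : ((sigma^-1)%g p < i) = (x0 p != tgt p).
    move: (hA p pS); rewrite /A; case: ifP => _ h.
      by apply: leq_trans h hi1.
    by apply/negbTE; rewrite -leqNgt (leq_trans hi2 h).
  by rewrite key; case: (x0 p) (tgt p) => [] [].
have cardB : #|Bset P n.+1| <= #|[set sigma : 'S_n.+1 | good_perm x0 S s m sigma]|.
  rewrite -(card_in_imset mk_inj); apply: subset_leq_card.
  apply/subsetP => _ /imsetP [t ht ->]; rewrite inE; apply: good_suff; exact: mkA.
have cP1 j : j < #|S| -> m - j <= #|P j| - j.
  move=> jk; apply: leq_sub2r.
  pose p := nth ord0 (enum S) j.
  have pS : p \in S by rewrite -mem_enum mem_nth // -cardE.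
  have ip : index p ord = j.
    by rewrite /ord index_cat mem_enum pS index_uniq ?enum_uniq // -cardE.
  have AP x : A p x -> P j x.
    move=> h; apply/forallP => q; apply/implyP => qS; apply/implyP => /eqP iq.
    have -> : q = p by apply: index_inj; rewrite ?ord_all // iq ip.
    exact: h.
  apply: (@card_ge _ _ (if x0 p != tgt p then 0 else n.+1 - m)).
    by case: ifP => _; lia.
  move=> i im; apply: AP; rewrite /A /=; case: (x0 p != tgt p); rewrite inordK; lia.
have cP2 j : #|S| <= j -> n.+1 - j <= #|P j| - j.
  move=> kj; apply: leq_sub2r; rewrite -[X in X <= _](card_ord n.+1).
  apply: subset_leq_card; apply/subsetP => x _.
  rewrite unfold_in; apply/forallP => q; apply/implyP => qS; apply/implyP => /eqP iq.
  move: kj; rewrite -iq /ord index_cat mem_enum qS.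
  have : index q (enum S) < #|S| by rewrite cardE index_mem mem_enum.
  by move=> h1 h2; exfalso; lia.
rewrite /hm_prob card_Sn.
apply: le_trans (arith (c := fun j => #|P j| - j) hSm hmn cP1 _) _.
  by move=> j /andP [h _]; apply: cP2.
rewrite ler_wpM2r ?invr_ge0 ?ler0n // ler_nat.
exact: leq_trans (count_inj P n.+1) cardB.
Qed.
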